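(* Let $n\ge q\ge1$, $L\ge1$, and let $B_1,\dots,B_r\subseteq[n]$ be fixed sets with $|B_j|\le L$. For sets $K_1,\dots,K_k\in\binom{[n]}{q}$, let $G$ be the intersection graph on the $k+r$ labeled objects $K_1,\dots,K_k,B_1,\dots,B_r$, with an edge between two objects iff their sets intersect. Then: (1) If $x\in[n]$ is fixed, the number of ordered $k$-tuples $(K_1,\dots,K_k)\in\binom{[n]}{q}^k$ such that $x\in\big(\bigcup_i K_i\big)\cup\big(\bigcup_j B_j\big)$ and $G$ is connected is at most $\binom{n-1}{q-1}^{k}(kq+rL)^{k+r-1}$. (2) If $k\ge1$ and $K_1\in\binom{[n]}{q}$ is fixed, the number of ordered $(k-1)$-tuples $(K_2,\dots,K_k)$ such that $G$ is connected is at most $q\binom{n-1}{q-1}^{k-1}(kq+rL)^{k+r-2}$. (3) If $k\ge2$, $e\in\{2,\dots,k\}$ is fixed and $K_1\in\binom{[n]}{q}$ is fixed, the number of ordered $(k-2)$-tuples $(K_2,\dots,K_{e-1},K_{e+1},\dots,K_k)$ such that, with $K_e=K_1$, $G$ is connected is at most $q\binom{n-1}{q-1}^{k-2}(kq+rL)^{k+r-3}$. (4) If $k\ge1$, $r\ge1$, $f\in[r]$ is fixed and $K_1=B_f\in\binom{[n]}{q}$, the number of ordered $(k-1)$-tuples $(K_2,\dots,K_k)$ such that $G$ is connected is at most $q\binom{n-1}{q-1}^{k-1}(kq+rL)^{k+r-3}$. In cases (3) and (4), when $k+r=2$ the count is $1$. *)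

(* Defs.v *)
From HB Require Import structures.
From mathcomp Require Import all_boot all_order all_algebra.
Set Implicit Arguments. Unset Strict Implicit. Unset Printing Implicit Defensive.
Import Order.TTheory GRing.Theory Num.Theory.

Definition obj (n k r : nat) (K : 'I_k -> {set 'I_n}) (B : 'I_r -> {set 'I_n})
  (o : 'I_k + 'I_r) : {set 'I_n} :=
  match o with inl i => K i | inr j => B j end.

Definition iedge (n k r : nat) (K : 'I_k -> {set 'I_n}) (B : 'I_r -> {set 'I_n})
  : rel ('I_k + 'I_r) :=
  fun a b => ~~ [disjoint obj K B a & obj K B b].

Definition iconnected (n k r : nat) (K : 'I_k -> {set 'I_n}) (B : 'I_r -> {set 'I_n})
  : bool :=
  [forall u, forall v, connect (iedge K B) u v].

(* Main.v *)
Require Import Defs.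
From HB Require Import structures.
From mathcomp Require Import all_boot all_order all_algebra.
From mathcomp Require Import zify ring.

Module Helpers.
Set Implicit Arguments. Unset Strict Implicit. Unset Printing Implicit Defensive.

Lemma setmeetP (T : finType) (A B : {set T}) :
  reflect (exists x, x \in A /\ x \in B) (~~ [disjoint A & B]).
Proof.
rewrite -setI_eq0; apply: (iffP (set0Pn _)) => [[x]|[x [hA hB]]].
  by rewrite inE => /andP[]; exists x.
by exists x; rewrite inE hA hB.
Qed.

Lemma card_bigcup_le (I T : finType) (P : pred I) (F : I -> {set T}) :
  #|\bigcup_(i | P i) F i| <= \sum_(i | P i) #|F i|.
Proof.
apply: (big_rec2 (fun (A : {set T}) (s : nat) => #|A| <= s)); first by rewrite cards0.
move=> i A s _ h; apply: leq_trans (leq_card_setU _ _) _; exact: leq_add.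
Qed.

Lemma sum_subsets_card (T : finType) (A : {set T}) (f : nat -> nat) :
  \sum_(J : {set T} | J \subset A) f #|J| = \sum_(i < #|A|.+1) 'C(#|A|, i) * f i.
Proof.
rewrite (partition_big (fun J : {set T} => (inord #|J| : 'I_(#|A|.+1))) predT) //=.
apply: eq_bigr => i _.
transitivity (\sum_(J in [set J : {set T} | J \subset A & #|J| == i]) f i).
  apply: eq_big => J; last first.
    move=> /andP[hJ /eqP <-]; rewrite inordK //; by rewrite ltnS subset_leq_card.
  rewrite inE; case hJ: (J \subset A) => //=.
  apply/eqP/eqP => [h|h]; first by rewrite -h inordK // ltnS subset_leq_card.
  by apply: val_inj; rewrite /= inordK ?h // ltnS subset_leq_card.
by rewrite sum_nat_const cards_draws.
Qed.

Lemma binom_subsets (T : finType) (A : {set T}) (a b : nat) :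
  \sum_(J : {set T} | J \subset A) a ^ #|J| * b ^ (#|A| - #|J|) = (a + b) ^ #|A|.
Proof.
rewrite (sum_subsets_card A (fun j => a ^ j * b ^ (#|A| - j))) addnC Pascal.
by apply: eq_bigr => i _; rewrite [RHS]mulnC [b ^ _ * _]mulnC mulnC.
Qed.


Lemma cross (T : finType) (e : rel T) (Z : {set T}) a b :
  connect e a b -> a \in Z -> b \notin Z -> exists u v, [/\ u \in Z, v \notin Z & e u v].
Proof.
move/connectP => [p hp ->]; elim: p a hp => [|c p IH] a /=; first by move=> _ ->.
move=> /andP[eac hp] aZ hZ; case: (boolP (c \in Z)) => cZ; first exact: IH hp cZ hZ.
by exists a, c.
Qed.

Section Main.
Variables (n q L r k : nat) (B : 'I_r -> {set 'I_n}).
Hypotheses (hq : 0 < q) (hL : 0 < L) (hB : forall j, #|B j| <= L).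

Local Notation O := ('I_k + 'I_r)%type.
Local Notation FF := {ffun 'I_k -> {set 'I_n}}.
Local Notation C := 'C(n.-1, q.-1).

Definition wt (o : O) : nat := if o is inl _ then q else L.
Definition wts (X : {set O}) := \sum_(o in X) wt o.
Definition nfree (X : {set O}) := #|[set i | inl i \in X]|.
Definition Gb (X : {set O}) (a : nat) :=
  if X == set0 then 1 else a * (a + wts X) ^ (#|X|.-1).
Definition good (K : FF) (X : {set O}) (U : {set 'I_n}) : bool :=
  [forall Y : {set O}, (Y \proper X) ==>
     [exists o in X :\: Y, ~~ [disjoint obj K B o & U :|: \bigcup_(y in Y) obj K B y]]].
Definition Cfg (K0 : FF) (X : {set O}) (U : {set 'I_n}) := [set K : FF |
  [forall i, if inl i \in X then #|K i| == q else K i == K0 i] && good K X U].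
Definition layer (K : FF) (X : {set O}) (U : {set 'I_n}) := [set o in X | ~~ [disjoint obj K B o & U]].
Definition Fam (K0 : FF) (I : {set O}) (U : {set 'I_n}) := [set K1 : FF |
  [forall i, if inl i \in I then (#|K1 i| == q) && ~~ [disjoint K1 i & U] else K1 i == K0 i]].
Definition restr (K K0 : FF) (I : {set O}) : FF := [ffun i => if inl i \in I then K i else K0 i].
Definition Vr (K : FF) (I : {set O}) := \bigcup_(o in I) obj K B o.

Lemma good_mono (K : FF) (X : {set O}) (U U' : {set 'I_n}) : U \subset U' -> good K X U -> good K X U'.
Proof.
move=> sU /forallP h; apply/forallP => Y; apply/implyP => hY.
have /existsP[o /andP[ho /setmeetP[x [x1 x2]]]] := implyP (h Y) hY.
apply/existsP; exists o; rewrite ho /=; apply/setmeetP; exists x; split=> //.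
move: x2; rewrite !inE => /orP[/(subsetP sU) -> //|->]; by rewrite orbT.
Qed.

Lemma good_layer (K : FF) (X : {set O}) (U : {set 'I_n}) : good K X U ->
  good K (X :\: layer K X U) (Vr K (layer K X U)).
Proof.
set I := layer K X U => /forallP h; apply/forallP => Y; apply/implyP => hY.
have sIX : I \subset X by apply/subsetP => o; rewrite inE => /andP[].
have hY' : (Y :|: I) \proper X.
  move/properP: hY => [sY [o ho hoY]].
  apply/properP; split.
    rewrite subUset sIX andbT; apply: subset_trans sY _; exact: subsetDl.
  exists o; first by move: ho; rewrite inE => /andP[].
  by move: ho; rewrite in_setD in_setU negb_or (negbTE hoY) => /andP[-> _].
have /existsP[o /andP[ho /setmeetP[x [x1 x2]]]] := implyP (h _) hY'.
apply/existsP; exists o.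
have hoX : o \in X by move: ho; rewrite inE => /andP[].
have hoI : o \notin I by move: ho; rewrite !inE => /andP[/norP[_ ->]].
rewrite !inE; move: ho; rewrite !inE => /andP[/norP[-> ->] ->] /=.
apply/setmeetP; exists x; split => //.
move: x2; rewrite bigcup_setU !in_setU => /orP[xU|/orP[xY|xI]].
- case/negP: hoI; rewrite /I /layer inE hoX /=; apply/setmeetP; exists x; split=> //.
- by rewrite xY orbT.
- by rewrite /Vr xI.
Qed.

Lemma expn_mono a b e : a <= b -> a ^ e <= b ^ e.
Proof. by move=> h; elim: e => // e IH; rewrite !expnS leq_mul. Qed.

Lemma Gb_mono (X : {set O}) a a' : a <= a' -> Gb X a <= Gb X a'.
Proof.
by move=> h; rewrite /Gb; case: ifP => // _; apply: leq_mul => //; apply: expn_mono; rewrite leq_add2r.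
Qed.

Lemma wt_gt0 o : 0 < wt o. Proof. by case: o. Qed.

Lemma wts_gt0 (X : {set O}) : X != set0 -> 0 < wts X.
Proof.
case/set0Pn => o ho; rewrite /wts (big_setD1 o ho) /=.
exact: leq_trans (wt_gt0 o) (leq_addr _ _).
Qed.

Lemma wts_split (X I : {set O}) : I \subset X -> wts X = wts I + wts (X :\: I).
Proof.
move=> sIX; rewrite /wts (big_setID I) /=; congr (_ + _).
by apply: eq_bigl => o; rewrite (setIidPr sIX).
Qed.

Lemma inner_sum (X : {set O}) (o : O) w : o \in X ->
  \sum_(I : {set O} | (I \subset X) && (o \in I)) w ^ #|I| * wts X ^ (#|X| - #|I|)
  = w * (w + wts X) ^ #|X|.-1.
Proof.
move=> oX.
rewrite (reindex_onto (fun J => o |: J) (fun I => I :\ o)); last first.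
  by move=> I /andP[_ oI]; rewrite setD1K.
have hX : #|X| = (#|X :\ o|).+1 by rewrite (cardsD1 o X) oX.
rewrite hX /= -binom_subsets big_distrr /=.
apply: eq_big => J.
  rewrite subUset sub1set oX setU11 /= subsetD1.
  case: (boolP (o \in J)) => oJ; last by rewrite setU1K // eqxx !andbT.
  rewrite andbT andbF; apply/negbTE/negP => /andP[_ /eqP h].
  by move: (setD11 o (o |: J)); rewrite h oJ.
move=> /andP[_ /eqP h]; have oJ : o \notin J by rewrite -h setD11.
by rewrite cardsU1 oJ add1n subSS expnS mulnA.
Qed.

Lemma CI (X : {set O}) w : X != set0 ->
  \sum_(I : {set O} | (I \subset X) && (I != set0)) w ^ #|I| * Gb (X :\: I) (wts I)
  = w * (w + wts X) ^ #|X|.-1.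
Proof.
move=> nX; have WX := wts_gt0 nX.
apply/eqP; rewrite -(eqn_pmul2l WX); apply/eqP.
rewrite big_distrr /=.
transitivity (\sum_(I : {set O} | I \subset X) w ^ #|I| * wts I * wts X ^ (#|X| - #|I|)).
  have w0 : wts set0 = 0 by rewrite /wts big_set0.
  rewrite [in RHS](bigD1 set0) ?sub0set //= w0 muln0 mul0n add0n.
  apply: eq_bigr => I /andP[sIX nI].
  rewrite /Gb; case: ifP => hXI.
    have eIX : I = X by apply/eqP; rewrite eqEsubset sIX -setD_eq0 hXI.
    by rewrite eIX subnn expn0 !muln1 mulnC.
  have pI : I \proper X.
    rewrite properEneq sIX andbT; apply/negP => /eqP eIX.
    by move: hXI; rewrite eIX setDv eqxx.
  have e0 : 0 < #|X| - #|I| by rewrite subn_gt0 proper_card.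
  rewrite -(wts_split sIX) cardsD (setIidPr sIX).
  rewrite -[in RHS](prednK e0) expnS.
  by rewrite mulnCA [wts X * (wts I * _)]mulnCA mulnA.
rewrite (eq_bigr (fun I : {set O} => \sum_(o in I) wt o * (w ^ #|I| * wts X ^ (#|X| - #|I|)))); last first.
  move=> I _; rewrite mulnAC mulnC (_ : wts I = \sum_(o in I) wt o) //.
  by rewrite big_distrl.
rewrite (exchange_big_dep (mem X)) /=; last by move=> I o sIX oI; exact: (subsetP sIX).
transitivity (\sum_(o in X) wt o * (w * (w + wts X) ^ #|X|.-1)).
  apply: eq_bigr => o oX; rewrite -big_distrr /= -(inner_sum w oX).
  by [].
by rewrite -big_distrl.
Qed.

Lemma card_qmem (u : 'I_n) :
  #|[set S : {set 'I_n} | (#|S| == q) && (u \in S)]| <= C.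
Proof.
have inj : {in [set S : {set 'I_n} | (#|S| == q) && (u \in S)] &, injective (fun S => S :\ u)}.
  move=> S1 S2; rewrite !inE => /andP[_ h1] /andP[_ h2] e.
  by rewrite -(setD1K h1) -(setD1K h2) e.
rewrite -(card_in_imset inj).
apply: leq_trans (subset_leq_card (_ : _ \subset
   [set A : {set 'I_n} | A \subset [set~ u] & #|A| == q.-1])) _.
  apply/subsetP => A /imsetP[S hS ->]; rewrite inE; move: hS; rewrite inE => /andP[/eqP hS hu].
  apply/andP; split.
    by apply/subsetP => y; rewrite !inE => /andP[].
  by move: hS; rewrite (cardsD1 u S) hu add1n => <-.
by rewrite cards_draws cardsC1 card_ord.
Qed.

Lemma card_qmeet (U : {set 'I_n}) :
  #|[set S : {set 'I_n} | (#|S| == q) && ~~ [disjoint S & U]]| <= #|U| * C.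
Proof.
apply: leq_trans (subset_leq_card (_ : _ \subset
   \bigcup_(u in U) [set S : {set 'I_n} | (#|S| == q) && (u \in S)])) _.
  apply/subsetP => S; rewrite inE => /andP[hS /setmeetP[x [xS xU]]].
  by apply/bigcupP; exists x => //; rewrite inE hS xS.
apply: leq_trans (card_bigcup_le _ _) _.
rewrite -sum_nat_const; apply: leq_sum => u _; exact: card_qmem.
Qed.

Lemma card_Fam (K0 : FF) (I : {set O}) (U : {set 'I_n}) :
  #|Fam K0 I U| <= (#|U| * C) ^ nfree I.
Proof.
pose F (i : 'I_k) : {set {set 'I_n}} := if inl i \in I
  then [set S : {set 'I_n} | (#|S| == q) && ~~ [disjoint S & U]] else [set K0 i].
have -> : #|Fam K0 I U| = #|family F|.
  apply: eq_card => K1; rewrite inE; apply/forallP/familyP => h i; have := h i;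
    rewrite /F; case: ifP => _; by rewrite !inE.
rewrite card_family foldrE big_image /=.
apply: leq_trans (_ : \prod_(i : 'I_k) (if inl i \in I then #|U| * C else 1) <= _).
  apply: leq_prod => i _; rewrite /F; case: ifP => _; [exact: card_qmeet | by rewrite cards1].
rewrite -big_mkcond /= prod_nat_const /nfree; apply: eq_leq; congr (_ ^ _).
by apply: eq_card => i; rewrite inE.
Qed.

Lemma nfree_le (I : {set O}) : nfree I <= #|I|.
Proof.
rewrite /nfree -(card_imset _ (@inl_inj 'I_k 'I_r)); apply: subset_leq_card.
by apply/subsetP => o /imsetP[i]; rewrite inE => hi ->.
Qed.

Lemma nfree_split (X I : {set O}) : I \subset X -> nfree X = nfree I + nfree (X :\: I).
Proof.
move=> sIX; rewrite /nfree -(cardsID [set i | inl i \in I] [set i | inl i \in X]).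
congr (_ + _); apply: eq_card => i; rewrite !inE.
  by case: (boolP (inl i \in I)) => hi; rewrite ?andbF ?andbT // (subsetP sIX).
by rewrite andbC.
Qed.

Lemma card_Vr (K1 K0 : FF) (I : {set O}) (U : {set 'I_n}) :
  K1 \in Fam K0 I U -> #|Vr K1 I| <= wts I.
Proof.
rewrite inE => /forallP h; apply: leq_trans (card_bigcup_le _ _) _.
apply: leq_sum => -[i|j] /= hi //; have := h i; rewrite hi => /andP[/eqP -> _] //.
Qed.

Lemma fiber (K0 : FF) (X I : {set O}) (U : {set 'I_n}) : I \subset X ->
  [set K in Cfg K0 X U | layer K X U == I] \subset
  \bigcup_(K1 in Fam K0 I U) Cfg K1 (X :\: I) (Vr K1 I).
Proof.
move=> sIX; apply/subsetP => K; rewrite !inE => /andP[/andP[/forallP hK hg] /eqP hI].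
apply/bigcupP; exists (restr K K0 I).
  rewrite inE; apply/forallP => i; rewrite /restr ffunE; case: ifP => hi; last by rewrite hi.
  have hiX : inl i \in X := subsetP sIX _ hi.
  have hq' : #|K i| = q by apply/eqP; have := hK i; rewrite hiX.
  rewrite hi hq' eqxx /=.
  by move: hi; rewrite -hI inE => /andP[_].
rewrite inE; apply/andP; split.
  apply/forallP => i; rewrite in_setD; case: (boolP (inl i \in I)) => hiI /=.
    by rewrite /restr ffunE hiI.
  have := hK i; case: (inl i \in X) => // h.
  by rewrite /restr ffunE (negbTE hiI).
have -> : Vr (restr K K0 I) I = Vr K I.
  by apply: eq_bigr => -[i|j] //= hi; rewrite /restr ffunE hi.
by rewrite -hI; exact: good_layer.
Qed.

Lemma ML (X : {set O}) : forall (K0 : FF) (U : {set 'I_n}),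
  #|Cfg K0 X U| <= C ^ nfree X * Gb X #|U|.
Proof.
elim: {X}_.+1 {-2}X (ltnSn #|X|) => // m IH X hX K0 U.
case: (eqVneq X set0) => [->|nX].
  rewrite /Gb eqxx muln1 /nfree.
  have -> : [set i | inl i \in (set0 : {set O})] = set0 by apply/setP => i; rewrite !inE.
  rewrite cards0 expn0.
  apply: leq_trans (subset_leq_card (_ : Cfg K0 set0 U \subset [set K0])) _; last by rewrite cards1.
  apply/subsetP => K; rewrite /Cfg !inE => /andP[/forallP h _]; apply/eqP/ffunP => i.
  by apply/eqP; have := h i; rewrite inE.
have cover : Cfg K0 X U \subset \bigcup_(I : {set O} | (I \subset X) && (I != set0))
    [set K in Cfg K0 X U | layer K X U == I].
  apply/subsetP => K hK; apply/bigcupP; exists (layer K X U); last by rewrite inE hK eqxx.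
  apply/andP; split; first by apply/subsetP => o; rewrite inE => /andP[].
  move: hK; rewrite /Cfg inE => /andP[_ /forallP /(_ set0)]; rewrite proper0 nX /=.
  move=> /existsP[o /andP[ho hm]].
  apply/set0Pn; exists o; rewrite inE; move: ho; rewrite inE => /andP[_ ->] /=.
  by move: hm; rewrite big_set0 setU0.
apply: leq_trans (subset_leq_card cover) _.
apply: leq_trans (card_bigcup_le _ _) _.
apply: leq_trans (_ : \sum_(I : {set O} | (I \subset X) && (I != set0))
    C ^ nfree X * (#|U| ^ #|I| * Gb (X :\: I) (wts I)) <= _); last first.
  by rewrite -big_distrr /= CI // /Gb (negbTE nX).
apply: leq_sum => I /andP[sIX nI].
case: (posnP #|U|) => hU.
  have U0 := cards0_eq hU.
  rewrite (_ : [set K in Cfg K0 X U | layer K X U == I] = set0) ?cards0 //.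
  apply/setP => K; rewrite !inE; apply/negbTE; apply/negP => /andP[_ /eqP hl].
  case/set0Pn: nI => o; rewrite -hl inE => /andP[_ /setmeetP[x [_]]]; by rewrite U0 inE.
apply: leq_trans (subset_leq_card (fiber K0 U sIX)) _.
apply: leq_trans (card_bigcup_le _ _) _.
have hlt : #|X :\: I| < m.
  have : 0 < #|I| by rewrite card_gt0.
  have : #|I| <= #|X| by exact: subset_leq_card.
  rewrite cardsD (setIidPr sIX); move: hX; lia.
apply: leq_trans (_ : \sum_(K1 in Fam K0 I U) C ^ nfree (X :\: I) * Gb (X :\: I) (wts I) <= _).
  apply: leq_sum => K1 hK1; apply: leq_trans (IH _ hlt K1 _) _.
  apply: leq_mul => //; apply: Gb_mono; exact: card_Vr hK1.
rewrite sum_nat_const (nfree_split sIX) expnD.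
have hF := card_Fam K0 I U; rewrite expnMn in hF.
have hu : #|U| ^ nfree I <= #|U| ^ #|I| := leq_pexp2l hU (nfree_le I).
apply: leq_trans (leq_mul hF (leqnn _)) _.
set a := #|U| ^ nfree I; set b := #|U| ^ #|I|; set c := C ^ nfree I.
set x := C ^ nfree (X :\: I); set g := Gb _ _.
have -> : a * c * (x * g) = (c * x) * (a * g) by ring.
by rewrite leq_mul2l leq_mul2r hu !orbT.
Qed.

Lemma CG (K : FF) (Z0 : {set O}) : iconnected K B -> Z0 != set0 ->
  good K (~: Z0) (\bigcup_(z in Z0) obj K B z).
Proof.
move=> /forallP hc nZ; apply/forallP => Y; apply/implyP => /properP [sY [v hv vY]].
case/set0Pn: nZ => z0 z0Z.
have h1 : z0 \in Z0 :|: Y by rewrite in_setU z0Z.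
have h2 : v \notin Z0 :|: Y by rewrite in_setU negb_or vY andbT -in_setC.
have [u [w [uZ wZ euw]]] := cross (forallP (hc z0) v) h1 h2.
move: wZ; rewrite in_setU negb_or => /andP[wZ0 wY].
apply/existsP; exists w; rewrite in_setD in_setC wZ0 wY /=.
move: euw; rewrite /iedge => /setmeetP[x [xu xw]]; apply/setmeetP; exists x; split => //.
case/setUP: uZ => [uZ|uY]; rewrite in_setU.
  by apply/orP; left; apply/bigcupP; exists u.
by apply/orP; right; apply/bigcupP; exists u.
Qed.

Definition W := k * q + r * L.
Definition m := k + r.

Lemma wtsT : wts [set: O] = W.
Proof.
rewrite /wts (eq_bigl predT) => [|o]; last by rewrite in_setT.
rewrite big_sumType /= !sum_nat_const !card_ord /W.
by congr (_ + _); apply: eq_card => i.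
Qed.

Lemma wts_compl (Z : {set O}) : wts (~: Z) = W - wts Z.
Proof. by rewrite -wtsT (wts_split (subsetT Z)) setTD addKn. Qed.

Lemma card_compl (Z : {set O}) : #|~: Z| = m - #|Z|.
Proof.
have h := cardsC Z; have e : #|{: O}| = m by rewrite card_sum !card_ord.
by rewrite -e -h addKn.
Qed.

Lemma nfree_compl (Z : {set O}) : nfree (~: Z) = k - nfree Z.
Proof.
have h := nfree_split (subsetT Z); rewrite setTD in h.
have hT : nfree [set: O] = k.
  rewrite /nfree (_ : [set i | inl i \in [set: O]] = [set: 'I_k]) ?cardsT ?card_ord //.
  by apply/setP => i; rewrite !inE.
by move: hT; rewrite h; lia.
Qed.

Lemma Gb_compl (Z : {set O}) a :
  Gb (~: Z) a = if m - #|Z| == 0 then 1 else a * (a + (W - wts Z)) ^ (m - #|Z|).-1.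
Proof. by rewrite /Gb -cards_eq0 card_compl wts_compl. Qed.

Lemma PG (Z0 : {set O}) (K0 : FF) (U : {set 'I_n}) (P : pred FF) :
  Z0 != set0 ->
  (forall K, P K -> [/\ iconnected K B,
     (forall i, if inl i \in Z0 then K i == K0 i else #|K i| == q) &
     \bigcup_(z in Z0) obj K B z \subset U]) ->
  #|[set K | P K]| <= C ^ (k - nfree Z0) * Gb (~: Z0) #|U|.
Proof.
move=> nZ hP; rewrite -nfree_compl; apply: leq_trans (ML (~: Z0) K0 U).
apply: subset_leq_card; apply/subsetP => K; rewrite !inE => /hP[hc hi hU].
apply/andP; split.
  apply/forallP => i; rewrite inE; have := hi i; by case: (inl i \in Z0).
exact: good_mono hU (CG hc nZ).
Qed.

Lemma nfree1 i0 : nfree [set inl i0] = 1.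
Proof.
rewrite /nfree (_ : [set i | inl i \in [set (inl i0 : O)]] = [set i0]) ?cards1 //.
by apply/setP => i; rewrite !inE.
Qed.

Lemma nfree1r j : nfree [set inr j] = 0.
Proof.
rewrite /nfree (_ : [set i | inl i \in [set (inr j : O)]] = set0) ?cards0 //.
by apply/setP => i; rewrite !inE.
Qed.

Lemma nfree2 i0 e : i0 != e -> nfree [set inl i0; inl e] = 2.
Proof.
move=> ne; rewrite /nfree (_ : [set i | inl i \in [set (inl i0 : O); inl e]] = [set i0; e]) ?cards2 ?ne //.
by apply/setP => i; rewrite !inE.
Qed.

Lemma nfree2r i0 f : nfree [set inl i0; inr f] = 1.
Proof.
rewrite /nfree (_ : [set i | inl i \in [set (inl i0 : O); inr f]] = [set i0]) ?cards1 //.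
by apply/setP => i; rewrite !inE orbF.
Qed.

Lemma wts1 o : wts [set o] = wt o.
Proof. by rewrite /wts big_set1. Qed.

Lemma wts2 o1 o2 : o1 != o2 -> wts [set o1; o2] = wt o1 + wt o2.
Proof. by move=> ne; rewrite /wts big_setU1 ?big_set1 // inE. Qed.

Lemma inl_eq (i j : 'I_k) : (inl i == inl j :> O) = (i == j).
Proof. by []. Qed.

Lemma W_ge_q : 0 < k -> q <= W.
Proof. by move=> hk; apply: leq_trans (leq_addr _ _); rewrite leq_pmull. Qed.

Lemma W_ge_L : 0 < r -> L <= W.
Proof. by move=> hr; apply: leq_trans (leq_addl _ _); rewrite leq_pmull. Qed.

Lemma W_ge_2q : 1 < k -> q + q <= W.
Proof.
by move=> hk; apply: leq_trans (leq_addr _ _); rewrite addnn -mul2n leq_mul2r hk orbT.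
Qed.

Lemma W_ge_qL : 0 < k -> 0 < r -> q + L <= W.
Proof. by move=> hk hr; rewrite /W leq_add // leq_pmull. Qed.

Lemma P2nat (hk : 0 < k) (K1 : {set 'I_n}) : #|K1| = q ->
  #|[set K : FF | [forall i, #|K i| == q] && (K (Ordinal hk) == K1) && iconnected K B]|
  <= C ^ (k - 1) * (if m == 1 then 1 else q * W ^ (m - 2)).
Proof.
move=> hK1; set i0 := Ordinal hk.
apply: leq_trans (PG (Z0 := [set inl i0]) (K0 := [ffun => K1]) (U := K1) _ _) _.
- by apply/set0Pn; exists (inl i0); rewrite inE.
- move=> K /andP[/andP[/forallP hq' /eqP h0] hc]; split => //.
    move=> i; rewrite inE inl_eq ffunE; case: eqP => [->|_]; by rewrite ?h0.
  by rewrite big_set1 /= h0.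
rewrite nfree1 Gb_compl cards1 wts1 /= hK1 subnKC ?W_ge_q //.
have hm : 1 <= m by rewrite /m; lia.
rewrite leq_mul2l; apply/orP; right.
case: (m =P 1) => [->|h1] //=.
have -> : (m - 1 == 0) = false by apply/eqP; lia.
by rewrite -subnS.
Qed.

Lemma P3nat (hk : 1 < k) (e : 'I_k) (K1 : {set 'I_n}) : 0 < e -> #|K1| = q ->
  #|[set K : FF | [forall i, #|K i| == q] && (K (Ordinal (ltnW hk)) == K1)
      && (K e == K1) && iconnected K B]|
  <= C ^ (k - 2) * (if m == 2 then 1 else q * W ^ (m - 3)).
Proof.
move=> he hK1; set i0 := Ordinal (ltnW hk).
have ne : i0 != e by rewrite -val_eqE /= eq_sym -lt0n.
have neO : (inl i0 : O) != inl e by rewrite inl_eq.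
apply: leq_trans (PG (Z0 := [set inl i0; inl e]) (K0 := [ffun => K1]) (U := K1) _ _) _.
- by apply/set0Pn; exists (inl i0); rewrite !inE eqxx.
- move=> K /andP[/andP[/andP[/forallP hq' /eqP h0] /eqP h1] hc]; split => //.
    move=> i; rewrite !inE !inl_eq ffunE.
    case: eqP => [->|_] /=; first by rewrite h0.
    case: eqP => [->|_] /=; first by rewrite h1.
    exact: hq'.
  apply/subsetP => x /bigcupP[z]; rewrite !inE => /orP[/eqP->|/eqP->] /=.
    by rewrite h0.
  by rewrite h1.
rewrite nfree2 // Gb_compl cards2 neO wts2 //= hK1.
have hW := W_ge_2q hk.
have hm : 2 <= m by rewrite /m; lia.
rewrite leq_mul2l; apply/orP; right.
case: (m =P 2) => [->|h2] //=.
have -> : (m - 2 == 0) = false by apply/eqP; lia.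
rewrite -subnS leq_mul2l; apply/orP; right; apply: expn_mono; lia.
Qed.

Lemma P4nat (hk : 0 < k) (f : 'I_r) : #|B f| = q ->
  #|[set K : FF | [forall i, #|K i| == q] && (K (Ordinal hk) == B f) && iconnected K B]|
  <= C ^ (k - 1) * (if m == 2 then 1 else q * W ^ (m - 3)).
Proof.
move=> hBf; set i0 := Ordinal hk.
have hr : 0 < r by apply: leq_ltn_trans (ltn_ord f); [].
have neO : (inl i0 : O) != inr f by [].
apply: leq_trans (PG (Z0 := [set inl i0; inr f]) (K0 := [ffun => B f]) (U := B f) _ _) _.
- by apply/set0Pn; exists (inl i0); rewrite !inE eqxx.
- move=> K /andP[/andP[/forallP hq' /eqP h0] hc]; split => //.
    move=> i; rewrite !inE inl_eq ffunE orbF.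
    case: eqP => [->|_] /=; first by rewrite h0.
    exact: hq'.
  apply/subsetP => x /bigcupP[z]; rewrite !inE => /orP[/eqP->|/eqP->] //=.
  by rewrite h0.
rewrite nfree2r Gb_compl cards2 neO wts2 //= hBf.
have hW := W_ge_qL hk hr.
have hm : 2 <= m by rewrite /m; lia.
rewrite leq_mul2l; apply/orP; right.
case: (m =P 2) => [->|h2] //=.
have -> : (m - 2 == 0) = false by apply/eqP; lia.
rewrite -subnS leq_mul2l; apply/orP; right; apply: expn_mono; lia.
Qed.

Lemma P1nat (x : 'I_n) : 0 < m ->
  #|[set K : FF | [forall i, #|K i| == q]
          && (x \in (\bigcup_i K i) :|: (\bigcup_j B j)) && iconnected K B]|
  <= C ^ k * W ^ (m - 1).
Proof.
move=> hm.
set QS := [set S : {set 'I_n} | (#|S| == q) && (x \in S)].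
have cov : [set K : FF | [forall i, #|K i| == q]
          && (x \in (\bigcup_i K i) :|: (\bigcup_j B j)) && iconnected K B] \subset
   (\bigcup_(i0 : 'I_k) \bigcup_(S in QS) Cfg [ffun => S] (~: [set inl i0]) S) :|:
   \bigcup_(j : 'I_r) Cfg [ffun => set0] (~: [set inr j]) (B j).
  apply/subsetP => K; rewrite inE => /andP[/andP[/forallP hq' hx] hc].
  case/setUP: hx => /bigcupP[].
    move=> i0 _ xi; apply/setUP; left; apply/bigcupP; exists i0 => //.
    apply/bigcupP; exists (K i0); first by rewrite inE hq' xi.
    rewrite /Cfg inE; apply/andP; split.
      apply/forallP => i; rewrite !inE inl_eq ffunE.
      by case: eqP => [->|_] /=.
    apply: good_mono (CG hc _); last by apply/set0Pn; exists (inl i0); rewrite inE.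
    by rewrite big_set1.
  move=> j _ xj; apply/setUP; right; apply/bigcupP; exists j => //.
  rewrite /Cfg inE; apply/andP; split.
    by apply/forallP => i; rewrite !inE /= hq'.
  apply: good_mono (CG hc _); last by apply/set0Pn; exists (inr j); rewrite inE.
  by rewrite big_set1.
apply: leq_trans (subset_leq_card cov) _.
apply: leq_trans (leq_card_setU _ _) _.
set G1 := if m == 1 then 1 else q * W ^ (m - 2).
set G2 := if m == 1 then 1 else L * W ^ (m - 2).
apply: leq_trans (leq_add (_ : _ <= k * (C * (C ^ (k - 1) * G1)))
                          (_ : _ <= r * (C ^ k * G2))) _.
- apply: leq_trans (card_bigcup_le _ _) _.
  apply: leq_trans (_ : _ <= \sum_(i0 : 'I_k) (C * (C ^ (k - 1) * G1))) _; last first.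
    by rewrite sum_nat_const card_ord.
  apply: leq_sum => i0 _.
  apply: leq_trans (card_bigcup_le _ _) _.
  apply: leq_trans (_ : _ <= \sum_(S in QS) C ^ (k - 1) * G1) _.
    apply: leq_sum => S; rewrite inE => /andP[/eqP hS _].
    apply: leq_trans (ML _ _ _) _; rewrite nfree_compl nfree1 hS leq_mul2l; apply/orP; right.
    rewrite Gb_compl cards1 wts1 /= /G1 subnKC ?W_ge_q //; last by case: (i0) => i /=; lia.
    case: (m =P 1) => [->|h1] //=.
    have -> : (m - 1 == 0) = false by apply/eqP; lia.
    by rewrite -subnS.
  by rewrite sum_nat_const leq_mul2r card_qmem orbT.
- apply: leq_trans (card_bigcup_le _ _) _.
  apply: leq_trans (_ : _ <= \sum_(j : 'I_r) (C ^ k * G2)) _; last first.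
    by rewrite sum_nat_const card_ord.
  apply: leq_sum => j _.
  apply: leq_trans (ML _ _ _) _; rewrite nfree_compl nfree1r subn0 leq_mul2l; apply/orP; right.
  apply: leq_trans (Gb_mono _ (hB j)) _.
  rewrite Gb_compl cards1 wts1 /= /G2 subnKC ?W_ge_L //; last by case: (j) => i /=; lia.
  case: (m =P 1) => [->|h1] //=.
  have -> : (m - 1 == 0) = false by apply/eqP; lia.
  by rewrite -subnS.
have -> : k * (C * (C ^ (k - 1) * G1)) = C ^ k * (k * G1).
  case: (k) => [|k'] /=; first by rewrite !mul0n muln0.
  by rewrite subSS subn0 expnS; ring.
rewrite [r * _]mulnCA -mulnDr leq_mul2l; apply/orP; right.
rewrite /G1 /G2; case: (m =P 1) => [h1|h1] /=.
  by rewrite !muln1 h1 subnn expn0 -h1.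
have -> : m - 1 = (m - 2).+1 by lia.
by rewrite expnS /W; apply: eq_leq; ring.
Qed.

End Main.

End Helpers.
Import Helpers.

Import Order.TTheory GRing.Theory Num.Theory.

Lemma conn_common (n k r : nat) (K : 'I_k -> {set 'I_n}) (B : 'I_r -> {set 'I_n}) x :
  (forall o, x \in obj K B o) -> iconnected K B.
Proof.
move=> h; apply/forallP => u; apply/forallP => v; apply: connect1.
by rewrite /iedge /=; apply/setmeetP; exists x.
Qed.

Local Open Scope ring_scope.

Lemma nat_rat_le (a b : nat) : (a <= b)%N -> (a%:R : rat) <= b%:R.
Proof. by rewrite ler_nat. Qed.

Theorem mainTheorem7 (n q L r k : nat) (B : 'I_r -> {set 'I_n}) :
  (1 <= q <= n)%N -> (1 <= L)%N -> (forall j, #|B j| <= L)%N ->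
  let C : rat := ('C(n.-1, q.-1))%:R in
  let M : rat := (k * q + r * L)%:R in
  [/\
   (* (1) *)
   forall x : 'I_n,
     (#|[set K : {ffun 'I_k -> {set 'I_n}} |
          [forall i, #|K i| == q]
          && (x \in (\bigcup_i K i) :|: (\bigcup_j B j))
          && iconnected K B]|%:R : rat)
     <= C ^+ k * M ^ ((k + r)%:Z - 1),
   (* (2) *)
   forall (hk : (0 < k)%N) (K1 : {set 'I_n}), #|K1| = q ->
     (#|[set K : {ffun 'I_k -> {set 'I_n}} |
          [forall i, #|K i| == q]
          && (K (Ordinal hk) == K1)
          && iconnected K B]|%:R : rat)
     <= q%:R * C ^+ (k - 1) * M ^ ((k + r)%:Z - 2),
   (* (3) *)
   forall (hk : (1 < k)%N) (e : 'I_k) (K1 : {set 'I_n}),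
     (0 < e)%N -> #|K1| = q ->
     let cnt : rat :=
       (#|[set K : {ffun 'I_k -> {set 'I_n}} |
          [forall i, #|K i| == q]
          && (K (Ordinal (ltnW hk)) == K1) && (K e == K1)
          && iconnected K B]|%:R) in
     ((k + r = 2)%N -> cnt = 1) /\
     ((2 < k + r)%N -> cnt <= q%:R * C ^+ (k - 2) * M ^ ((k + r)%:Z - 3))
   &
   (* (4) *)
   forall (hk : (0 < k)%N) (f : 'I_r), #|B f| = q ->
     let cnt : rat :=
       (#|[set K : {ffun 'I_k -> {set 'I_n}} |
          [forall i, #|K i| == q]
          && (K (Ordinal hk) == B f)
          && iconnected K B]|%:R) in
     ((k + r = 2)%N -> cnt = 1) /\
     ((2 < k + r)%N -> cnt <= q%:R * C ^+ (k - 1) * M ^ ((k + r)%:Z - 3))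
  ].
Proof.
move=> /andP[hq _] hL hB C M.
have hM : M = (W q L r k)%:R by [].
split.
- move=> x; case: (posnP (k + r)) => hm.
    have k0 : k = 0%N by lia.
    have r0 : r = 0%N by lia.
    subst k r.
    rewrite (_ : [set K : {ffun 'I_0 -> {set 'I_n}} | _] = set0) ?cards0.
      by rewrite mulr_ge0 ?exprz_ge0 ?exprn_ge0 ?ler0n.
    by apply/setP => K; rewrite !inE !big_ord0 !inE andbF.
  have h := P1nat hq hL hB x hm.
  rewrite (_ : ((k + r)%:Z - 1 = (k + r - 1)%N :> int)); last by rewrite subzn.
  by rewrite -exprnP hM /C -!natrX -natrM ler_nat.
- move=> hk K1 hK1; have h := P2nat hq hL hB hk hK1.
  case: (k + r =P 1)%N => hm.
    have k1 : k = 1%N by lia.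
    have r0 : r = 0%N by lia.
    subst k r.
    move: h; rewrite /m eqxx muln1 /= => h.
    rewrite /M /C /= mul1n mul0n addn0 expr0 mulr1.
    have -> : ((1 + 0)%N%:Z - 2 = -1 :> int) by [].
    rewrite exprN1 mulfV ?pnatr_eq0 -?lt0n // .
    by rewrite -(ler_nat rat) in h.
  have hm2 : (2 <= k + r)%N by lia.
  move: h; rewrite /m (introF eqP hm) mulnCA mulnA => h.
  rewrite (_ : ((k + r)%:Z - 2 = (k + r - 2)%N :> int)); last by rewrite subzn.
  by rewrite -exprnP hM /C -!natrX -!natrM ler_nat.
- move=> hk e K1 he hK1 cnt; have h := P3nat hq hL hB hk he hK1.
  split.
    move=> hm.
    have k2 : k = 2%N by lia.
    have r0 : r = 0%N by lia.
    subst k r; rewrite /cnt.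
    move: h; rewrite /m eqxx muln1 /= => h.
    apply/eqP; rewrite pnatr_eq1 eqn_leq h /= card_gt0.
    apply/set0Pn; exists [ffun => K1]; rewrite inE !ffunE eqxx /= !andbT.
    apply/andP; split; first by apply/forallP => i; rewrite ffunE hK1.
    have : (0 < #|K1|)%N by rewrite hK1.
    rewrite card_gt0 => /set0Pn[x xK]; apply: (@conn_common _ _ _ _ _ x).
    by move=> -[i|[j hj]] //=; rewrite ffunE.
  move=> hm.
  move: h; rewrite /m (_ : (k + r == 2)%N = false) => [|]; last by apply/eqP; lia.
  rewrite mulnCA mulnA => h.
  rewrite /cnt (_ : ((k + r)%:Z - 3 = (k + r - 3)%N :> int)); last by rewrite subzn.
  by rewrite -exprnP hM /C -!natrX -!natrM ler_nat.
- move=> hk f hBf cnt; have h := P4nat hq hL hB hk hBf.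
  split.
    move=> hm.
    have hr : (0 < r)%N by apply: leq_ltn_trans (ltn_ord f).
    have k1 : k = 1%N by lia.
    have r1 : r = 1%N by lia.
    subst k r; rewrite /cnt.
    move: h; rewrite /m eqxx muln1 /= => h.
    apply/eqP; rewrite pnatr_eq1 eqn_leq h /= card_gt0.
    apply/set0Pn; exists [ffun => B f]; rewrite inE !ffunE eqxx /= !andbT.
    apply/andP; split; first by apply/forallP => i; rewrite ffunE hBf.
    have : (0 < #|B f|)%N by rewrite hBf.
    rewrite card_gt0 => /set0Pn[x xK]; apply: (@conn_common _ _ _ _ _ x).
    by move=> -[i|j] /=; rewrite ?ffunE // (ord1 j) -(ord1 f).
  move=> hm.
  move: h; rewrite /m (_ : (k + r == 2)%N = false) => [|]; last by apply/eqP; lia.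
  rewrite mulnCA mulnA => h.
  rewrite /cnt (_ : ((k + r)%:Z - 3 = (k + r - 3)%N :> int)); last by rewrite subzn.
  by rewrite -exprnP hM /C -!natrX -!natrM ler_nat.
Qed.
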